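(* Let $p,q\le 5$ and let $f$ (with $p$ arguments) and $g$ (with $q$ arguments) be real functions whose values depend only on the relative order of their argument lists, with $|f|\le 5$ and $|g|\le 5$. If $\pi$ is a uniformly distributed permutation of $\{1^{n_1},\dots,h^{n_h}\}$ with $n=\sum_a n_a\ge p+q$, then \[\Bigl|\mathrm{Cov}\bigl(f(\pi(1),\dots,\pi(p)),\,g(\pi(p+1),\dots,\pi(p+q))\bigr)\Bigr|\le C/n\] for an absolute constant $C$ (independent of $h$, $n$, the $n_a$, $f$, $g$).
   Context: A permutation of the multiset $\{1^{n_1},\dots,h^{n_h}\}$ ($n_a$ positive integers) is a sequence $(\pi(1),\dots,\pi(n))$ in which each $a$ occurs exactly $n_a$ times; uniformly distributed means all such sequences are equally likely. The relative order of a sequence $s_1,\dots,s_p$ is the ordered partition of $\{1,\dots,p\}$ obtained by putting $q$ and $r$ in the same block iff $s_q=s_r$, with blocks ordered by increasing common value of $s_q$. *)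

(* Defs.v *)
From HB Require Import structures.
From mathcomp Require Import all_boot all_order all_algebra.
Set Implicit Arguments. Unset Strict Implicit. Unset Printing Implicit Defensive.
Import Order.TTheory GRing.Theory Num.Theory.

Definition rel_order (s : seq nat) : seq (seq nat) :=
  [seq [seq i <- iota 0 (size s) | nth 0 s i == v] | v <- sort leq (undup s)].

Definition depends_on_rel_order (R : Type) (p : nat) (f : seq nat -> R) :=
  forall s t, size s = p -> size t = p -> rel_order s = rel_order t -> f s = f t.

(* Permutations of the multiset {0^{ns 0}, ..., (h-1)^{ns (h-1)}} of total size n
   (values shifted by -1 w.r.t. the paper; relative orders are unaffected). *)
Definition multiset_perms (h n : nat) (ns : 'I_h -> nat) : {set n.-tuple 'I_h} :=
  [set t : n.-tuple 'I_h | [forall a : 'I_h, count_mem a t == ns a]].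

Section Expect.
Variables (R : realFieldType) (h n : nat) (ns : 'I_h -> nat).
Local Open Scope ring_scope.

Definition unif_expect (X : n.-tuple 'I_h -> R) : R :=
  (\sum_(t in multiset_perms n ns) X t) / (#|multiset_perms n ns|)%:R.

Definition unif_cov (X Y : n.-tuple 'I_h -> R) : R :=
  unif_expect (fun t => X t * Y t) - unif_expect X * unif_expect Y.
End Expect.

Definition as_nats {h n : nat} (t : n.-tuple 'I_h) : seq nat := map val (val t).

(* Main.v *)
Set Warnings "-notation-overridden,-ambiguous-paths".
Require Import Defs.
From HB Require Import structures.
From mathcomp Require Import all_boot all_order all_algebra all_fingroup zify.
Set Implicit Arguments. Unset Strict Implicit.
Import Order.TTheory GRing.Theory Num.Theory.

Lemma ext_perm_seq (T : finType) (a b : seq T) :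
  uniq a -> uniq b -> size a = size b -> exists r : {perm T}, map r a = b.
Proof.
move=> ua ub sab.
have key : forall c : seq T, uniq c ->
  let C := c ++ [seq x <- enum T | x \notin c] in uniq C /\ size C = #|T| /\ (forall x, x \in C).
  move=> c uc C.
  have mC : forall x, x \in C by move=> x; rewrite mem_cat mem_filter mem_enum andbT orbN.
  have uC : uniq C.
    rewrite cat_uniq uc filter_uniq ?enum_uniq // andbT.
    by apply/hasPn => x; rewrite mem_filter => /andP[].
  split=> //; split=> //.
  rewrite cardE; apply: perm_size; apply: uniq_perm => //; first exact: enum_uniq.
  by move=> x; rewrite mC mem_enum.
have [uA [sA mA]] := key a ua.
have [uB [sB mB]] := key b ub.
set A := a ++ _ in uA sA mA.
set B := b ++ _ in uB sB mB.
pose f x := nth x B (index x A).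
have iA : forall x, index x A < size B by move=> x; rewrite sB -sA index_mem.
have finj : injective f.
  move=> x y; rewrite /f (set_nth_default y x (iA x)) => /eqP.
  rewrite nth_uniq // => /eqP e.
  by rewrite -(nth_index x (mA x)) -(nth_index x (mA y)) e.
exists (perm finj).
case ea: a => [|x0 a']; first by rewrite ea /= in sab; move: sab; case: (b) => //.

rewrite -ea.
apply: (@eq_from_nth _ x0); first by rewrite size_map.
move=> i; rewrite size_map => ia.
rewrite (nth_map x0) // permE /f index_cat mem_nth // index_uniq //.
rewrite nth_cat -sab ia.
by apply: set_nth_default; rewrite -sab.
Qed.

Lemma ext_perm (I T : finType) (u v : I -> T) :
  injective u -> injective v -> exists r : {perm T}, forall i, r (u i) = v i.
Proof.
move=> iu iv.
have [r hr] : exists r : {perm T}, map r (map u (enum I)) = map v (enum I).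
  apply: ext_perm_seq; by rewrite ?size_map // map_inj_uniq // enum_uniq.
exists r => i.
move: hr; rewrite -map_comp => /eq_in_map /(_ i); rewrite mem_enum /= => ->; done.
Qed.

Lemma card_perm_val (T : finType) (x y : T) :
  (#|T| * #|[set s : {perm T} | s x == y]|)%N = #|{perm T}|.
Proof.
have eqc : forall y y', #|[set s : {perm T} | s x == y]| <= #|[set s : {perm T} | s x == y']|.
  move=> y1 y2.
  have -> : [set s : {perm T} | s x == y2] =
     [set (s * tperm y1 y2)%g | s in [set s : {perm T} | s x == y1]].
    apply/setP => s; rewrite inE; apply/idP/imsetP.
      move=> /eqP sx; exists (s * tperm y1 y2)%g; last by rewrite -mulgA tperm2 mulg1.
      by rewrite inE permM sx tpermR.
    by move=> [s' ]; rewrite inE => /eqP s'x ->; rewrite permM s'x tpermL.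
  by rewrite card_imset //; apply: mulIg.
have -> : #|{perm T}| = (\sum_(z : T) #|[set s : {perm T} | s x == z]|)%N.
  transitivity (\sum_(s : {perm T}) 1)%N; first by rewrite sum1_card.
  rewrite (eq_bigr (fun s : {perm T} => \sum_(z : T) nat_of_bool (s x == z))%N); last first.
    by move=> s _; rewrite (bigD1 (s x)) //= eqxx big1 // => z /negPf; rewrite eq_sym => ->.
  rewrite exchange_big /=; apply: eq_bigr => z _.
  rewrite -sum1_card [RHS]big_mkcond /=; apply: eq_bigr => s _; rewrite inE; by case: (s x == z).
rewrite (eq_bigr (fun=> #|[set s : {perm T} | s x == y]|)); last first.
  by move=> z _; apply/eqP; rewrite eqn_leq !eqc.
by rewrite sum_nat_const.
Qed.
Definition act {h n : nat} (s : {perm 'I_n}) (t : n.-tuple 'I_h) : n.-tuple 'I_h :=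
  [tuple tnth t (s i) | i < n].

Lemma actM h n (s r : {perm 'I_n}) (t : n.-tuple 'I_h) :
  act s (act r t) = act (s * r)%g t.
Proof. by apply: eq_from_tnth => i; rewrite !tnth_mktuple permM. Qed.

Lemma act1 h n (t : n.-tuple 'I_h) : act 1%g t = t.
Proof. by apply: eq_from_tnth => i; rewrite !tnth_mktuple perm1. Qed.

Lemma act_S h n (ns : 'I_h -> nat) (s : {perm 'I_n}) t :
  t \in multiset_perms n ns -> act s t \in multiset_perms n ns.
Proof.
rewrite !inE => /forallP H; apply/forallP => a.
have pe : perm_eq (act s t) t by apply/tuple_permP; exists s.
by move/seq.permP: pe => ->; apply: H.
Qed.

Lemma act_trans h n (ns : 'I_h -> nat) t t' :
  t \in multiset_perms n ns -> t' \in multiset_perms n ns -> exists s, t' = act s t.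
Proof.
rewrite !inE => /forallP H /forallP H'.
have pe : perm_eq t' t.
  rewrite /perm_eq; apply/allP => x _ /=.
  by rewrite (eqP (H' x)) (eqP (H x)).
have [s hs] := tuple_permP pe.
by exists s; apply: val_inj.
Qed.

Lemma sum_act (R : nmodType) h n (ns : 'I_h -> nat) (F : n.-tuple 'I_h -> R) s :
  (\sum_(t in multiset_perms n ns) F (act s t) = \sum_(t in multiset_perms n ns) F t)%R.
Proof.
rewrite [RHS](reindex (act s)) /=; last first.
  by exists (act (s^-1)%g) => t _; rewrite actM ?mulVg ?mulgV act1.
apply: eq_bigl => t; apply/idP/idP; first exact: act_S.
by move/(@act_S h n ns (s^-1)%g); rewrite actM mulVg act1.
Qed.

Lemma nth_as_nats h n (t : n.-tuple 'I_h) j (hj : j < n) :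
  nth 0 (as_nats t) j = tnth t (Ordinal hj).
Proof.
rewrite /as_nats (nth_map (tnth t (Ordinal hj))) ?size_tuple //.
by rewrite [in RHS](tnth_nth (tnth t (Ordinal hj))).
Qed.

Lemma size_as_nats h n (t : n.-tuple 'I_h) : size (as_nats t) = n.
Proof. by rewrite /as_nats size_map size_tuple. Qed.

Lemma take_drop_act h n (t : n.-tuple 'I_h) (s r : {perm 'I_n}) a m :
  (forall k (hk : a + k < n), k < m -> s (Ordinal hk) = r (Ordinal hk)) ->
  take m (drop a (as_nats (act s t))) = take m (drop a (as_nats (act r t))).
Proof.
move=> H; apply: (@eq_from_nth _ 0).
  by rewrite !size_take !size_drop !size_as_nats.
move=> k; rewrite size_take size_drop size_as_nats => hk.
have [km akn] : k < m /\ a + k < n.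
  by move: hk; case: ifP => [/idP|/negbT] H1 hk; split; lia.
rewrite !nth_take // !nth_drop.
rewrite -/(as_nats _) !(@nth_as_nats _ _ _ _ akn) !tnth_mktuple H //.
Qed.

Lemma posq_lt p q n (hpq : p + q <= n) (i : 'I_q) : p + i < n.
Proof. by apply: leq_trans hpq; rewrite ltn_add2l. Qed.
Lemma posp_lt p q n (hpq : p + q <= n) (j : 'I_p) : j < n.
Proof. exact: leq_trans (ltn_ord j) (leq_trans (leq_addr q p) hpq). Qed.
Definition posq p q n (hpq : p + q <= n) (i : 'I_q) : 'I_n := Ordinal (posq_lt hpq i).
Definition posp p q n (hpq : p + q <= n) (j : 'I_p) : 'I_n := Ordinal (posp_lt hpq j).

Definition badp p q n (hpq : p + q <= n) (s : {perm 'I_n}) : bool :=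
  [exists i : 'I_q, exists j : 'I_p, s (posq hpq i) == posp hpq j].

Lemma good_ext p q n (hpq : p + q <= n) (s : {perm 'I_n}) :
  ~~ badp hpq s -> exists r : {perm 'I_n},
    (forall j, r (posp hpq j) = posp hpq j) /\ (forall i, r (posq hpq i) = s (posq hpq i)).
Proof.
move=> gs.
pose u (x : ('I_p + 'I_q)%type) := match x with inl j => posp hpq j | inr i => posq hpq i end.
pose v (x : ('I_p + 'I_q)%type) := match x with inl j => posp hpq j | inr i => s (posq hpq i) end.
have ne : forall j i, posp hpq j != posq hpq i.
  move=> j i; apply/eqP => /(congr1 val) /= e.
  by move: (ltn_ord j); rewrite e ltnNge leq_addr.
have iu : injective u.
  case=> [j|i] [j'|i'] /= e.
  - by congr inl; apply: val_inj; move/(congr1 val): e.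
  - by move: (ne j i'); rewrite e eqxx.
  - by move: (ne j' i); rewrite e eqxx.
  - by congr inr; apply: val_inj; move/(congr1 val): e => /= /eqP; rewrite eqn_add2l => /eqP.
have iv : injective v.
  case=> [j|i] [j'|i'] /= e.
  - by congr inl; apply: val_inj; move/(congr1 val): e.
  - by move: gs; rewrite /badp negb_exists => /forallP/(_ i'); rewrite negb_exists => /forallP/(_ j); rewrite e eqxx.
  - by move: gs; rewrite /badp negb_exists => /forallP/(_ i); rewrite negb_exists => /forallP/(_ j'); rewrite e eqxx.
  - by congr inr; apply: val_inj; move/perm_inj/(congr1 val): e => /= /eqP; rewrite eqn_add2l => /eqP.
have [r hr] := ext_perm iu iv.
by exists r; split => [j|i]; [exact: (hr (inl j)) | exact: (hr (inr i))].
Qed.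

Lemma card_bad p q n (hpq : p + q <= n) :
  (n * #|[set s : {perm 'I_n} | badp hpq s]| <= p * q * #|{perm 'I_n}|)%N.
Proof.
have H1 : (#|[set s : {perm 'I_n} | badp hpq s]| <=
   \sum_(i : 'I_q) \sum_(j : 'I_p) #|[set s : {perm 'I_n} | s (posq hpq i) == posp hpq j]|)%N.
  rewrite -sum1_card big_mkcond /=.
  rewrite (eq_bigr (fun i => \sum_(s : {perm 'I_n}) \sum_(j : 'I_p) nat_of_bool (s (posq hpq i) == posp hpq j))%N); last first.
    move=> i _; rewrite exchange_big; apply: eq_bigr => j _.
    by rewrite -sum1_card [LHS]big_mkcond; apply: eq_bigr => s _; rewrite inE; case: (_ == _).
  rewrite exchange_big /=.
  apply: leq_sum => s _; rewrite inE.
  case bs: (badp hpq s) => //.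
  move: bs; rewrite /badp => /existsP [i /existsP [j /eqP e]].
  rewrite exchange_big /= (bigD1 j) //= (bigD1 i) //= e eqxx.
  by rewrite -addnA leq_addr.
apply: (leq_trans (leq_mul (leqnn n) H1)).
rewrite big_distrr /=.
rewrite (eq_bigr (fun=> p * #|{perm 'I_n}|)%N); last first.
  move=> i _; rewrite big_distrr /=.
  rewrite (eq_bigr (fun=> #|{perm 'I_n}|)) ?sum_nat_const ?card_ord //.
  by move=> j _; rewrite -(card_perm_val (posq hpq i) (posp hpq j)) card_ord.
by rewrite sum_nat_const card_ord mulnA (mulnC q).
Qed.

From mathcomp Require Import ring.
Local Open Scope ring_scope.

Lemma cov_alg (R : fieldType) (a b c N M : R) : N != 0 -> M != 0 ->
  a / N - b / N * (N * c / M / N) = (M * a - b * c) / (M * N).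
Proof. by move=> hN hM; field; rewrite hN hM. Qed.

Lemma cov_core (R : realFieldType) (p q h n : nat) (ns : 'I_h -> nat)
      (f g : seq nat -> R) (hpq : (p + q <= n)%N) :
    (forall s, size s = p -> `|f s| <= 5) ->
    (forall s, size s = q -> `|g s| <= 5) ->
    `| unif_cov ns (fun t : n.-tuple 'I_h => f (take p (as_nats t)))
                   (fun t : n.-tuple 'I_h => g (take q (drop p (as_nats t)))) |
      <= 50 * #|[set s : {perm 'I_n} | badp hpq s]|%:R / #|{perm 'I_n}|%:R.
Proof.
move=> hf hg.
set X := fun t : n.-tuple 'I_h => f (take p (as_nats t)).
set Y := fun t : n.-tuple 'I_h => g (take q (drop p (as_nats t))).
set S := multiset_perms n ns.
set Bad := [set s : {perm 'I_n} | badp hpq s].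
have hX : forall t, `|X t| <= 5.
  by move=> t; apply: hf; rewrite size_takel // size_as_nats; apply: leq_trans (leq_addr _ _) hpq.
have hY : forall t, `|Y t| <= 5.
  by move=> t; apply: hg; rewrite size_takel // size_drop size_as_nats leq_subRL // ?(leq_trans (leq_addr _ _) hpq).
have hXY : forall t t', `|X t * Y t'| <= 25.
  move=> t t'; rewrite normrM; have -> : (25 : R) = 5 * 5 by rewrite -natrM.
  by apply: ler_pM => //.
have Mpos : (0 < #|{perm 'I_n}|%:R :> R).
  by rewrite ltr0n; apply/card_gt0P; exists 1%g.
have Bge0 : 0 <= 50 * #|Bad|%:R / #|{perm 'I_n}|%:R :> R.
  by apply: divr_ge0 => //; apply: mulr_ge0 => //; apply: ltW.
rewrite /unif_cov /unif_expect.
case: (set_0Vmem S) => [S0 | [t0 t0S]].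
  by rewrite -/S S0 !big_set0 !mul0r subrr normr0.
rewrite -/S.
set N := (#|S|%:R : R).
have Npos : 0 < N by rewrite ltr0n; apply/card_gt0P; exists t0.
set M := (#|{perm 'I_n}|%:R : R).
have Xinv : forall (s : {perm 'I_n}) t, (forall j, s (posp hpq j) = posp hpq j) -> X (act s t) = X t.
  move=> s t hs; rewrite /X -[in RHS](act1 t).
  rewrite -[as_nats (act s t)]drop0 -[as_nats (act 1%g t)]drop0.
  congr f; apply: take_drop_act => k hk kp.
  have -> : Ordinal hk = posp hpq (Ordinal kp) by apply: val_inj.
  by rewrite hs perm1.
have Yinv : forall (s r : {perm 'I_n}) t, (forall i, s (posq hpq i) = r (posq hpq i)) -> Y (act s t) = Y (act r t).
  move=> s r t hs; rewrite /Y; congr g; apply: take_drop_act => k hk kq.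
  have -> : Ordinal hk = posq hpq (Ordinal kq) by apply: val_inj.
  by rewrite hs.
have sum_good : forall s : {perm 'I_n}, ~~ badp hpq s ->
    \sum_(t in S) X t * Y (act s t) = \sum_(t in S) X t * Y t.
  move=> s gs; have [r [hr1 hr2]] := good_ext gs.
  rewrite -(sum_act _ (fun t => X t * Y t) r); apply: eq_bigr => t _.
  by rewrite Xinv // (Yinv s r).
pose W t := \sum_(s : {perm 'I_n}) Y (act s t).
have Wconst : forall t, t \in S -> W t = W t0.
  move=> t tS; have [s0 ->] := act_trans t0S tS.
  rewrite /W [RHS](reindex_inj (mulIg s0)) /=; apply: eq_bigr => s _.
  by rewrite actM.
have hSY : M * (\sum_(t in S) Y t) = N * W t0.
  transitivity (\sum_(t in S) W t).
    rewrite /W exchange_big /= [RHS](eq_bigr (fun=> \sum_(t in S) Y t)); last first.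
      by move=> s _; rewrite (sum_act _ Y s).
    by rewrite sumr_const mulr_natl.
  rewrite [LHS](eq_bigr (fun=> W t0)); last by move=> t /Wconst.
  by rewrite sumr_const mulr_natl.
have h2 : \sum_(s : {perm 'I_n}) \sum_(t in S) X t * Y (act s t) = (\sum_(t in S) X t) * W t0.
  rewrite exchange_big /= mulr_suml; apply: eq_bigr => t tS.
  by rewrite -(Wconst t tS) /W mulr_sumr.
set Sxy := \sum_(t in S) X t * Y t.
set E := \sum_(s : {perm 'I_n}) (Sxy - \sum_(t in S) X t * Y (act s t)).
have hE : E = M * Sxy - (\sum_(t in S) X t) * W t0.
  by rewrite /E sumrB h2 sumr_const mulr_natl.
have hEb : `|E| <= 50 * N * #|Bad|%:R.
  rewrite /E (bigID (fun s => s \in Bad)) /= [X in _ + X]big1 ?addr0; last first.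
    by move=> s; rewrite inE => /sum_good ->; rewrite subrr.
  apply: (le_trans (ler_norm_sum _ _ _)).
  rewrite (eq_bigl (fun s => s \in Bad)) //.
  apply: le_trans (_ : \sum_(s in Bad) (50 * N) <= _); last by rewrite sumr_const mulr_natr.
  apply: ler_sum => s _.
  apply: (le_trans (ler_normB _ _)).
  have -> : 50 * N = 25 * N + 25 * N by rewrite -mulrDl -natrD.
  apply: lerD; apply: (le_trans (ler_norm_sum _ _ _));
    (apply: le_trans (_ : \sum_(t in S) (25 : R) <= _); last by rewrite sumr_const mulr_natr);
    by apply: ler_sum => t _; apply: hXY.
have hcov : (\sum_(t in S) X t * Y t) / N -
    (\sum_(t in S) X t) / N * ((\sum_(t in S) Y t) / N) = E / (M * N).
  have hSY' : \sum_(t in S) Y t = N * W t0 / M.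
    by rewrite -hSY [RHS]mulrC mulKf // gt_eqF.
  by rewrite hE hSY'; apply: cov_alg; rewrite gt_eqF.
have MNpos : 0 < M * N by apply: mulr_gt0.
rewrite hcov normrM normfV (gtr0_norm MNpos).
rewrite ler_pdivrMr //.
apply: (le_trans hEb).
rewrite mulrA divfK ?gt_eqF //.
by rewrite mulrAC.
Qed.

Theorem lemma2p10 :
  exists C : nat,
  forall (R : realFieldType) (p q h n : nat) (ns : 'I_h -> nat)
         (f g : seq nat -> R),
    (p <= 5)%N -> (q <= 5)%N ->
    depends_on_rel_order p f -> depends_on_rel_order q g ->
    (forall s, size s = p -> `|f s| <= 5) ->
    (forall s, size s = q -> `|g s| <= 5) ->
    (forall a, (0 < ns a)%N) ->
    n = (\sum_(a < h) ns a)%N ->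
    (p + q <= n)%N ->
    `| unif_cov ns (fun t : n.-tuple 'I_h => f (take p (as_nats t)))
                   (fun t : n.-tuple 'I_h => g (take q (drop p (as_nats t)))) |
      <= C%:R / n%:R.
Proof.
exists 1250%N => R p q h n ns f g hp hq _ _ hf hg _ _ hpq.
apply: le_trans (cov_core ns hpq hf hg) _.
have hc := card_bad hpq.
have Mpos : (0 < #|{perm 'I_n}|%:R :> R).
  by rewrite ltr0n; apply/card_gt0P; exists 1%g.
case: (posnP n) => [n0 | npos].
  have p0 : p = 0%N by apply/eqP; rewrite -leqn0 -n0; apply: leq_trans (leq_addr q p) hpq.
  have -> : #|[set s : {perm 'I_n} | badp hpq s]| = 0%N.
    apply/eqP; rewrite cards_eq0; apply/eqP/setP => s; rewrite !inE /badp.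
    apply/negbTE/existsP => [[i /existsP [j _]]].
    by have := ltn_ord j; rewrite {2}p0.
  have -> : (n%:R : R) = 0 by rewrite n0.
  by rewrite mulr0 !mul0r invr0 mulr0.
rewrite ler_pdivrMr // mulrAC ler_pdivlMr ?ltr0n //.
rewrite -!natrM ler_nat.
have h25 : (p * q * #|{perm 'I_n}| <= 25 * #|{perm 'I_n}|)%N.
  by rewrite leq_mul2r (leq_mul hp hq) orbT.
rewrite -mulnA (mulnC _ n) (_ : 1250 = 50 * 25)%N // -mulnA leq_pmul2l //.
exact: leq_trans hc h25.
Qed.
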